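(* Let $(F_E,\xi,\eta,g_E)$ be an almost contact Riemannian structure on a Lie algebroid $(E,\rho_E,[\cdot,\cdot]_E)$ of rank $2m+1$, with Levi-Civita connection $\nabla$ of $g_E$. Then $(F_E,\xi,\eta,g_E)$ is Sasakian (i.e. $d_E\eta=\Omega_E$ and $N_{F_E}+2\,d_E\eta\otimes\xi=0$) if and only if $$(\nabla_{s_1}F_E)s_2=g_E(s_1,s_2)\xi-\eta(s_2)s_1\quad\text{for all }s_1,s_2\in\Gamma(E).$$
   Context: A Lie algebroid $(E,\rho_E,[\cdot,\cdot]_E)$ over $M$ is a vector bundle with anchor $\rho_E:E\to TM$ and Lie bracket on $\Gamma(E)$ with $[s_1,fs_2]_E=f[s_1,s_2]_E+\rho_E(s_1)(f)s_2$. For a 1-form $\eta$, $(d_E\eta)(s_1,s_2)=\frac12\{\rho_E(s_1)(\eta(s_2))-\rho_E(s_2)(\eta(s_1))-\eta([s_1,s_2]_E)\}$. An almost contact Riemannian structure $(F_E,\xi,\eta,g_E)$: endomorphism $F_E$, $\xi\in\Gamma(E)$, $\eta\in\Gamma(E^* )$, bundle metric $g_E$ with $F_E^2=-I_E+\eta\otimes\xi$, $\eta(\xi)=1$, $g_E(F_Es_1,F_Es_2)=g_E(s_1,s_2)-\eta(s_1)\eta(s_2)$; fundamental form $\Omega_E(s_1,s_2)=g_E(s_1,F_Es_2)$. $N_{F_E}(s_1,s_2)=[F_Es_1,F_Es_2]_E-F_E[F_Es_1,s_2]_E-F_E[s_1,F_Es_2]_E+F_E^2[s_1,s_2]_E$.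 The Levi-Civita connection $\nabla$ is the unique $E$-connection ($\nabla_{fs}s'=f\nabla_ss'$, $\nabla_s(fs')=f\nabla_ss'+\rho_E(s)(f)s'$) that is torsion-free ($\nabla_{s_1}s_2-\nabla_{s_2}s_1=[s_1,s_2]_E$) and metric ($\rho_E(s)(g_E(s_1,s_2))=g_E(\nabla_ss_1,s_2)+g_E(s_1,\nabla_ss_2)$); $(\nabla_sF_E)s'=\nabla_s(F_Es')-F_E(\nabla_ss')$. *)

(* Defs.v *)
(* Lie algebroids are modelled through their module of smooth sections:
   the rank-n bundle E is (set-theoretically) identified fibrewise with
   'rV[R]_n, a section is a map M -> 'rV_n, and the smooth structure is
   encoded by the predicates C (smooth functions) and Gam (smooth sections). *)
From HB Require Import structures.
From mathcomp Require Import all_boot all_order all_algebra.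
From mathcomp Require Import reals.
Set Implicit Arguments. Unset Strict Implicit. Unset Printing Implicit Defensive.
Import Order.TTheory GRing.Theory Num.Theory.
Local Open Scope ring_scope.

Section LieAlgebroidDefs.
Variables (R : realType) (M : Type) (n : nat).

Definition fn := M -> R.
Definition sec := M -> 'rV[R]_n.

Definition fcst (c : R) : fn := fun _ => c.
Definition fadd (f h : fn) : fn := fun x => f x + h x.
Definition fmul (f h : fn) : fn := fun x => f x * h x.
Definition fopp (f : fn) : fn := fun x => - f x.
Definition sadd (s1 s2 : sec) : sec := fun x => s1 x + s2 x.
Definition sopp (s : sec) : sec := fun x => - s x.
Definition szero : sec := fun _ => 0.
Definition sscale (f : fn) (s : sec) : sec := fun x => f x *: s x.

Definition fun_ring (C : fn -> Prop) : Prop :=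
  [/\ forall c, C (fcst c),
      forall f h, C f -> C h -> C (fadd f h),
      forall f h, C f -> C h -> C (fmul f h) &
      forall f, C f -> C (fopp f)].

Definition section_module (C : fn -> Prop) (Gam : sec -> Prop) : Prop :=
  [/\ Gam szero,
      forall s1 s2, Gam s1 -> Gam s2 -> Gam (sadd s1 s2),
      forall f s, C f -> Gam s -> Gam (sscale f s) &
      forall x (v : 'rV[R]_n), exists s, Gam s /\ s x = v].

Definition lie_algebroid (C : fn -> Prop) (Gam : sec -> Prop)
    (rho : sec -> fn -> fn) (br : sec -> sec -> sec) : Prop :=
  [/\ fun_ring C, section_module C Gam,
    ([/\ forall s f, Gam s -> C f -> C (rho s f),
        forall s1 s2 f, Gam s1 -> Gam s2 -> C f ->
          rho (sadd s1 s2) f = fadd (rho s1 f) (rho s2 f) &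
        forall h s f, C h -> Gam s -> C f ->
          rho (sscale h s) f = fmul h (rho s f)] /\
    [/\ forall s c f, Gam s -> C f ->
          rho s (fmul (fcst c) f) = fmul (fcst c) (rho s f),
        forall s f h, Gam s -> C f -> C h ->
          rho s (fadd f h) = fadd (rho s f) (rho s h) &
        forall s f h, Gam s -> C f -> C h ->
          rho s (fmul f h) = fadd (fmul f (rho s h)) (fmul h (rho s f))]),
    [/\ forall s1 s2, Gam s1 -> Gam s2 -> Gam (br s1 s2),
        forall s1 s2 s3, Gam s1 -> Gam s2 -> Gam s3 ->
          br s1 (sadd s2 s3) = sadd (br s1 s2) (br s1 s3),
        forall s1 s2, Gam s1 -> Gam s2 -> br s1 s2 = sopp (br s2 s1) &
        forall s1 s2 s3, Gam s1 -> Gam s2 -> Gam s3 ->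
          sadd (br s1 (br s2 s3)) (sadd (br s2 (br s3 s1)) (br s3 (br s1 s2)))
            = szero] &
    ((forall s1 f s2, Gam s1 -> C f -> Gam s2 ->
       br s1 (sscale f s2) = sadd (sscale f (br s1 s2)) (sscale (rho s1 f) s2)) /\
    (forall s1 s2 f, Gam s1 -> Gam s2 -> C f ->
       rho (br s1 s2) f = fadd (rho s1 (rho s2 f)) (fopp (rho s2 (rho s1 f)))))].

(* Pointwise tensor data: F_E(x) acts on row vectors by v |-> v *m F x,
   eta_x(v) = (v *m eta x) 0 0, g_x(u,v) = (u *m g x *m v^T) 0 0. *)
Variables (F : M -> 'M[R]_n) (xi : sec) (eta : M -> 'cV[R]_n)
          (g : M -> 'M[R]_n).

Definition sF (s : sec) : sec := fun x => s x *m F x.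
Definition seta (s : sec) : fn := fun x => (s x *m eta x) 0 0.
Definition sg (s1 s2 : sec) : fn := fun x => (s1 x *m g x *m (s2 x)^T) 0 0.
Definition Omega (s1 s2 : sec) : fn := sg s1 (sF s2).

Definition almost_contact_riemannian (C : fn -> Prop) (Gam : sec -> Prop) : Prop :=
  [/\ Gam xi,
      forall s, Gam s -> Gam (sF s),
      forall s, Gam s -> C (seta s),
      forall s1 s2, Gam s1 -> Gam s2 -> C (sg s1 s2) &
      forall x,
      [/\ F x *m F x = - 1%:M + eta x *m xi x,
          (xi x *m eta x) 0 0 = 1,
          F x *m g x *m (F x)^T = g x - eta x *m (eta x)^T,
          (g x)^T = g x &
          forall v : 'rV[R]_n, v != 0 -> 0 < (v *m g x *m v^T) 0 0]].

Variables (rho : sec -> fn -> fn) (br : sec -> sec -> sec).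

Definition d_eta (s1 s2 : sec) : fn :=
  fun x => 2^-1 * (rho s1 (seta s2) x - rho s2 (seta s1) x - seta (br s1 s2) x).

Definition NF (s1 s2 : sec) : sec :=
  fun x => br (sF s1) (sF s2) x - sF (br (sF s1) s2) x
           - sF (br s1 (sF s2)) x + sF (sF (br s1 s2)) x.

Definition sasakian (Gam : sec -> Prop) : Prop :=
  forall s1 s2, Gam s1 -> Gam s2 ->
    d_eta s1 s2 = Omega s1 s2 /\
    (fun x => NF s1 s2 x + (2 * d_eta s1 s2 x) *: xi x) = szero.

Definition levi_civita (C : fn -> Prop) (Gam : sec -> Prop)
    (nabla : sec -> sec -> sec) : Prop :=
  [/\ forall s1 s2, Gam s1 -> Gam s2 -> Gam (nabla s1 s2),
      forall s1 s2 s3, Gam s1 -> Gam s2 -> Gam s3 ->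
        nabla (sadd s1 s2) s3 = sadd (nabla s1 s3) (nabla s2 s3),
      forall f s s', C f -> Gam s -> Gam s' ->
        nabla (sscale f s) s' = sscale f (nabla s s') &
    [/\ forall s s1 s2, Gam s -> Gam s1 -> Gam s2 ->
        nabla s (sadd s1 s2) = sadd (nabla s s1) (nabla s s2),
      forall s f s', Gam s -> C f -> Gam s' ->
        nabla s (sscale f s') = sadd (sscale f (nabla s s')) (sscale (rho s f) s'),
      forall s1 s2, Gam s1 -> Gam s2 ->
        sadd (nabla s1 s2) (sopp (nabla s2 s1)) = br s1 s2 &
      forall s s1 s2, Gam s -> Gam s1 -> Gam s2 ->
        rho s (sg s1 s2) = fadd (sg (nabla s s1) s2) (sg s1 (nabla s s2))]].

Definition nablaF (nabla : sec -> sec -> sec) (s s' : sec) : sec :=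
  fun x => nabla s (sF s') x - sF (nabla s s') x.

End LieAlgebroidDefs.

(* Main.v *)
Require Import Defs.
From HB Require Import structures.
From mathcomp Require Import all_boot all_order all_algebra.
From mathcomp Require Import reals ring lra.
From Stdlib Require Import FunctionalExtensionality.
Set Implicit Arguments. Unset Strict Implicit. Unset Printing Implicit Defensive.
Import Order.TTheory GRing.Theory Num.Theory.
Local Open Scope ring_scope.

Lemma mxDE (R : nmodType) m n (A B : 'M[R]_(m,n)) i j : (A + B) i j = A i j + B i j.
Proof. by rewrite mxE. Qed.
Lemma mxNE (R : zmodType) m n (A : 'M[R]_(m,n)) i j : (- A) i j = - A i j.
Proof. by rewrite mxE. Qed.
Lemma mxBE (R : zmodType) m n (A B : 'M[R]_(m,n)) i j : (A - B) i j = A i j - B i j.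
Proof. by rewrite !mxE. Qed.
Lemma mxZE (R : pzRingType) m n a (A : 'M[R]_(m,n)) i j : (a *: A) i j = a * A i j.
Proof. by rewrite mxE. Qed.

Section Pt.
Variables (R : realType) (n : nat).
Variables (F g : 'M[R]_n) (xi : 'rV[R]_n) (eta : 'cV[R]_n).
Hypotheses (HFF : F *m F = - 1%:M + eta *m xi) (Hxe : (xi *m eta) 0 0 = 1)
  (HFg : F *m g *m F^T = g - eta *m eta^T) (Hgs : g^T = g).

Definition G (u v : 'rV[R]_n) := (u *m g *m v^T) 0 0.
Definition E (u : 'rV[R]_n) := (u *m eta) 0 0.

Lemma GDl u v w : G (u + v) w = G u w + G v w.
Proof. by rewrite /G !mulmxDl mxE. Qed.
Lemma GDr u v w : G w (u + v) = G w u + G w v.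
Proof. by rewrite /G linearD /= mulmxDr mxE. Qed.
Lemma GZl a u w : G (a *: u) w = a * G u w.
Proof. by rewrite /G -!scalemxAl mxE. Qed.
Lemma GZr a u w : G w (a *: u) = a * G w u.
Proof. by rewrite /G linearZ /= -scalemxAr mxE. Qed.
Lemma GNl u w : G (- u) w = - G u w.
Proof. by rewrite -scaleN1r GZl mulN1r. Qed.
Lemma GNr u w : G w (- u) = - G w u.
Proof. by rewrite -scaleN1r GZr mulN1r. Qed.
Lemma G0l w : G 0 w = 0.
Proof. by rewrite /G !mul0mx mxE. Qed.
Lemma G0r w : G w 0 = 0.
Proof. by rewrite /G linear0 mulmx0 mxE. Qed.
Lemma Gsym u v : G u v = G v u.
Proof.
rewrite /G.
have h (A : 'M[R]_1) : A 0 0 = A^T 0 0 by rewrite mxE.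
by rewrite h !trmx_mul trmxK Hgs mulmxA.
Qed.
Lemma ED u v : E (u + v) = E u + E v.
Proof. by rewrite /E mulmxDl mxE. Qed.
Lemma EZ a u : E (a *: u) = a * E u.
Proof. by rewrite /E -scalemxAl mxE. Qed.
Lemma EN u : E (- u) = - E u.
Proof. by rewrite /E mulNmx mxE. Qed.
Lemma E0 : E 0 = 0.
Proof. by rewrite /E mul0mx mxE. Qed.
Lemma Exi : E xi = 1.
Proof. exact: Hxe. Qed.

Lemma xe1 : xi *m eta = 1%:M.
Proof. by apply/matrixP=> i j; rewrite !ord1 Hxe mxE. Qed.

Lemma xiF : xi *m F = 0.
Proof.
have h1 : xi *m F *m F = 0.
  by rewrite -mulmxA HFF mulmxDr mulmxN mulmx1 mulmxA xe1 mul1mx addNr.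
set c := (xi *m F *m eta) 0 0.
have h2 : xi *m F = c *: xi.
  have : xi *m F *m (F *m F) = 0 by rewrite mulmxA h1 mul0mx.
  rewrite HFF mulmxDr mulmxN mulmx1 mulmxA => /eqP.
  rewrite addrC subr_eq0 => /eqP <-.
  apply/rowP => j; rewrite !mxE big_ord1 /c //.
have h3 : c * c = 0.
  have : (xi *m F *m F *m eta) 0 0 = 0 by rewrite h1 mul0mx mxE.
  by rewrite h2 -scalemxAl h2 -!scalemxAl xe1 !mxE eqxx mulr1n mulr1 => ->.
have : c = 0 by apply/eqP; rewrite -[c == 0]orbb -mulf_eq0 h3.
by rewrite h2 => ->; rewrite scale0r.
Qed.

Lemma Feta : F *m eta = 0.
Proof.
have e1 : F *m (F *m F) = (F *m F) *m F by rewrite mulmxA.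
move: e1; rewrite HFF mulmxDr mulmxDl mulmxN mulmx1 mulNmx mul1mx -mulmxA xiF mulmx0 addr0.
move/(congr1 (fun A => A *m eta)).
rewrite mulmxDl -(mulmxA F) -mulmxA xe1 mulmx1 mulNmx addNr.
by move/eqP; rewrite eq_sym oppr_eq0 => /eqP.
Qed.

Lemma m11 (A : 'M[R]_(1,1)) (B : 'rV[R]_n) : A *m B = A 0 0 *: B.
Proof. by apply/rowP => j; rewrite !mxE big_ord1 !ord1. Qed.
Lemma m11' (A B : 'M[R]_(1,1)) : (A *m B) 0 0 = A 0 0 * B 0 0.
Proof. by rewrite !mxE big_ord1. Qed.

Lemma gxi : g *m xi^T = eta.
Proof.
have := congr1 (fun A => A *m xi^T) HFg => /=.
rewrite -mulmxA -trmx_mul xiF trmx0 mulmx0 mulmxBl -mulmxA -trmx_mul xe1 trmx1 mulmx1.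
by move/eqP; rewrite eq_sym subr_eq0 => /eqP.
Qed.

Lemma FgT : F *m g = - (g *m F^T).
Proof.
have e1 : F *m g *m F^T *m F^T = g *m F^T.
  by rewrite HFg mulmxBl -(mulmxA eta) -trmx_mul Feta trmx0 mulmx0 subr0.
have e2 : F *m g *m F^T *m F^T = - (F *m g).
  rewrite -mulmxA -trmx_mul HFF linearD /= linearN /= trmx1 trmx_mul mulmxDr mulmxN mulmx1.
  by rewrite mulmxA -(mulmxA F) gxi Feta mul0mx addr0.
by rewrite -e1 e2 opprK.
Qed.

Lemma Gxi u : G u xi = E u.
Proof. by rewrite /G -mulmxA gxi. Qed.
Lemma EF u : E (u *m F) = 0.
Proof. by rewrite /E -mulmxA Feta mulmx0 mxE. Qed.
Lemma FF u : u *m F *m F = - u + E u *: xi.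
Proof. by rewrite -mulmxA HFF mulmxDr mulmxN mulmx1 mulmxA m11. Qed.
Lemma GFl u v : G (u *m F) v = - G u (v *m F).
Proof.
rewrite /G -(mulmxA u) FgT mulmxN mulNmx mxE trmx_mul !mulmxA //.
Qed.
Lemma GFF u v : G (u *m F) (v *m F) = G u v - E u * E v.
Proof.
rewrite /G.
have -> : u *m F *m g *m (v *m F)^T = u *m (F *m g *m F^T) *m v^T by rewrite trmx_mul !mulmxA.
rewrite HFg mulmxBr mulmxBl mxBE.
have -> : u *m (eta *m eta^T) *m v^T = (u *m eta) *m (v *m eta)^T by rewrite trmx_mul !mulmxA.
by rewrite m11' [_^T 0 0]mxE /E.
Qed.
End Pt.

Section Main.
Variables (R : realType) (M : Type) (n : nat).
Variables (C : fn R M -> Prop) (Gam : sec R M n -> Prop)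
    (rho : sec R M n -> fn R M -> fn R M)
    (br : sec R M n -> sec R M n -> sec R M n)
    (F : M -> 'M[R]_n) (xi : sec R M n)
    (eta : M -> 'cV[R]_n) (g : M -> 'M[R]_n)
    (nabla : sec R M n -> sec R M n -> sec R M n).
Hypotheses (HL : lie_algebroid C Gam rho br)
  (HA : almost_contact_riemannian F xi eta g C Gam)
  (HN : levi_civita g rho br C Gam nabla).

Local Notation Gx x := (G (g x)).
Local Notation Ex x := (E (eta x)).
Local Notation sF := (sF F).
Local Notation seta := (seta eta).
Local Notation sg := (sg g).
Local Notation sz := (@szero R M n).

Lemma Ccst c : C (fcst c). Proof. by case: HL => [[]] *; eauto. Qed.
Lemma CD f h : C f -> C h -> C (fadd f h). Proof. by case: HL => [[]] *; eauto. Qed.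
Lemma CM f h : C f -> C h -> C (fmul f h). Proof. by case: HL => [[]] *; eauto. Qed.
Lemma CN f : C f -> C (fopp f). Proof. by case: HL => [[]] *; eauto. Qed.
Lemma Gam0 : Gam sz. Proof. by case: HL => _ [] *; eauto. Qed.
Lemma GamD s1 s2 : Gam s1 -> Gam s2 -> Gam (sadd s1 s2). Proof. by case: HL => _ [] *; eauto. Qed.
Lemma GamZ f s : C f -> Gam s -> Gam (sscale f s). Proof. by case: HL => _ [] *; eauto. Qed.
Lemma Gspan x (v : 'rV[R]_n) : exists s, Gam s /\ s x = v. Proof. by case: HL => _ [] *; eauto. Qed.
Lemma rhoC s f : Gam s -> C f -> C (rho s f). Proof. by case: HL => _ _ [[]] *; eauto. Qed.
Lemma rho_cmul s c f : Gam s -> C f -> rho s (fmul (fcst c) f) = fmul (fcst c) (rho s f).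
Proof. by case: HL => _ _ [_ []] *; eauto. Qed.
Lemma rho_add s f h : Gam s -> C f -> C h -> rho s (fadd f h) = fadd (rho s f) (rho s h).
Proof. by case: HL => _ _ [_ []] *; eauto. Qed.
Lemma rho_mul s f h : Gam s -> C f -> C h ->
  rho s (fmul f h) = fadd (fmul f (rho s h)) (fmul h (rho s f)).
Proof. by case: HL => _ _ [_ []] *; eauto. Qed.
Lemma brG s1 s2 : Gam s1 -> Gam s2 -> Gam (br s1 s2). Proof. by case: HL => _ _ _ [] *; eauto. Qed.
Lemma br_anti s1 s2 : Gam s1 -> Gam s2 -> br s1 s2 = sopp (br s2 s1).
Proof. by case: HL => _ _ _ [] *; eauto. Qed.
Lemma br_jac s1 s2 s3 : Gam s1 -> Gam s2 -> Gam s3 ->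
  sadd (br s1 (br s2 s3)) (sadd (br s2 (br s3 s1)) (br s3 (br s1 s2))) = sz.
Proof. by case: HL => _ _ _ [] *; eauto. Qed.
Lemma anchor s1 s2 f : Gam s1 -> Gam s2 -> C f ->
  rho (br s1 s2) f = fadd (rho s1 (rho s2 f)) (fopp (rho s2 (rho s1 f))).
Proof. by case: HL => _ _ _ _ [] *; eauto. Qed.

Lemma Gxi0 : Gam xi. Proof. by case: HA => *; eauto. Qed.
Lemma GamF s : Gam s -> Gam (sF s). Proof. by case: HA => *; eauto. Qed.
Lemma Ceta s : Gam s -> C (seta s). Proof. by case: HA => *; eauto. Qed.
Lemma Cg s1 s2 : Gam s1 -> Gam s2 -> C (sg s1 s2). Proof. by case: HA => *; eauto. Qed.
Lemma hx x : [/\ F x *m F x = - 1%:M + eta x *m xi x,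
          (xi x *m eta x) 0 0 = 1,
          F x *m g x *m (F x)^T = g x - eta x *m (eta x)^T,
          (g x)^T = g x &
          forall v : 'rV[R]_n, v != 0 -> 0 < (v *m g x *m v^T) 0 0].
Proof. by case: HA => _ _ _ _ /(_ x). Qed.

Lemma nG s1 s2 : Gam s1 -> Gam s2 -> Gam (nabla s1 s2). Proof. by case: HN => *; eauto. Qed.
Lemma n_addl s1 s2 s3 : Gam s1 -> Gam s2 -> Gam s3 ->
  nabla (sadd s1 s2) s3 = sadd (nabla s1 s3) (nabla s2 s3). Proof. by case: HN => *; eauto. Qed.
Lemma n_scl f s s' : C f -> Gam s -> Gam s' ->
  nabla (sscale f s) s' = sscale f (nabla s s'). Proof. by case: HN => *; eauto. Qed.
Lemma n_addr s s1 s2 : Gam s -> Gam s1 -> Gam s2 ->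
  nabla s (sadd s1 s2) = sadd (nabla s s1) (nabla s s2). Proof. by case: HN => _ _ _ [] *; eauto. Qed.
Lemma n_leib s f s' : Gam s -> C f -> Gam s' ->
  nabla s (sscale f s') = sadd (sscale f (nabla s s')) (sscale (rho s f) s').
Proof. by case: HN => _ _ _ [] *; eauto. Qed.
Lemma n_tor s1 s2 : Gam s1 -> Gam s2 ->
  sadd (nabla s1 s2) (sopp (nabla s2 s1)) = br s1 s2.
Proof. by case: HN => _ _ _ [] *; eauto. Qed.
Lemma n_met s s1 s2 : Gam s -> Gam s1 -> Gam s2 ->
  rho s (sg s1 s2) = fadd (sg (nabla s s1) s2) (sg s1 (nabla s s2)).
Proof. by case: HN => _ _ _ [] *; eauto. Qed.

Lemma GFlx x u v : Gx x (u *m F x) v = - Gx x u (v *m F x).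
Proof. by case: (hx x) => *; eapply GFl; eassumption. Qed.
Lemma GFFx x u v : Gx x (u *m F x) (v *m F x) = Gx x u v - Ex x u * Ex x v.
Proof. by case: (hx x) => *; eapply GFF; eassumption. Qed.
Lemma FFx x u : u *m F x *m F x = - u + Ex x u *: xi x.
Proof. by case: (hx x) => *; eapply FF; eassumption. Qed.
Lemma EFx x u : Ex x (u *m F x) = 0.
Proof. by case: (hx x) => *; eapply EF; eassumption. Qed.
Lemma Gxix x u : Gx x u (xi x) = Ex x u.
Proof. by case: (hx x) => *; eapply Gxi; eassumption. Qed.
Lemma Gxix' x u : Gx x (xi x) u = Ex x u.
Proof. by case: (hx x) => *; rewrite (Gsym (g:=g x)) //; eapply Gxi; eassumption. Qed.
Lemma Gsymx x u v : Gx x u v = Gx x v u.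
Proof. by case: (hx x) => *; eapply Gsym; eassumption. Qed.
Lemma xiFx x : xi x *m F x = 0.
Proof. by case: (hx x) => *; eapply xiF; eassumption. Qed.
Lemma Exix x : Ex x (xi x) = 1.
Proof. by case: (hx x). Qed.


Lemma fe (f h : fn R M) : (forall x, f x = h x) -> f = h.
Proof. exact: functional_extensionality. Qed.
Lemma se (s t : sec R M n) : (forall x, s x = t x) -> s = t.
Proof. exact: functional_extensionality. Qed.

Lemma rho_cst s c x : Gam s -> rho s (fcst c) x = 0.
Proof.
move=> Hs.
have h1 : rho s (fcst 1) x = 0.
  have e : fmul (fcst 1) (fcst 1) = fcst (1:R) :> fn R M.
    by apply: fe => y; rewrite /fmul /fcst mulr1.
  have := congr1 (fun f => f x) (rho_mul Hs (Ccst 1) (Ccst 1)).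
  rewrite e /fadd /fmul /fcst mul1r => h; lra.
have e : fcst c = fmul (fcst c) (fcst 1) :> fn R M.
  by apply: fe => y; rewrite /fmul /fcst mulr1.
rewrite e rho_cmul //; last exact: Ccst.
rewrite /fmul /= (_ : rho s (fcst 1) x = 0) ?mulr0 //.
Qed.

Lemma rho_opp s f x : Gam s -> C f -> rho s (fopp f) x = - rho s f x.
Proof.
move=> Hs Hf.
have e : fopp f = fmul (fcst (-1)) f by apply: fe => y; rewrite /fmul /fcst /fopp mulN1r.
by rewrite e rho_cmul // /fmul /fcst /= mulN1r.
Qed.
Lemma rho_addx s f h x : Gam s -> C f -> C h -> rho s (fadd f h) x = rho s f x + rho s h x.
Proof. by move=> *; rewrite rho_add. Qed.
Lemma rho_scx s c f x : Gam s -> C f -> rho s (fmul (fcst c) f) x = c * rho s f x.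
Proof. by move=> *; rewrite rho_cmul. Qed.

Lemma metx s A B x : Gam s -> Gam A -> Gam B ->
  rho s (sg A B) x = Gx x (nabla s A x) (B x) + Gx x (A x) (nabla s B x).
Proof. by move=> *; rewrite n_met. Qed.
Lemma torx A B x : Gam A -> Gam B -> br A B x = nabla A B x - nabla B A x.
Proof. by move=> HA' HB'; rewrite -(n_tor HA' HB'). Qed.

Lemma n0r s x : Gam s -> nabla s sz x = 0.
Proof.
move=> Hs.
have e : sz = sadd sz sz by apply: se => y; rewrite /sadd /szero addr0.
have := congr1 (fun t => t x) (n_addr Hs Gam0 Gam0).
rewrite -e /sadd => /(congr1 (fun w => w - nabla s sz x)).
by rewrite subrr addrK => ->.
Qed.
Lemma n0l s x : Gam s -> nabla sz s x = 0.
Proof.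
move=> Hs.
have e : sz = sscale (fcst 0) sz by apply: se => y; rewrite /sscale /szero scale0r.
rewrite e n_scl //; [|exact: Ccst|exact: Gam0].
by rewrite /sscale /fcst /= scale0r.
Qed.

Lemma seta_sg A : seta A = sg A xi.
Proof. by apply: fe => y; symmetry; exact: (Gxix y (A y)). Qed.
Lemma sFxi : sF xi = sz.
Proof. by apply: se => y; rewrite /Defs.sF xiFx. Qed.
Lemma sgxixi : sg xi xi = fcst 1.
Proof. by apply: fe => y; rewrite /fcst -(Exix y); exact: (Gxix y (xi y)). Qed.

Definition Q A B z x := Gx x (nablaF F nabla A B x) z.
Definition K A z x := Gx x (nabla A xi x) z.

Lemma Kxi0 A x : Gam A -> K A (xi x) x = 0.
Proof.
move=> HA'; have := metx x HA' Gxi0 Gxi0.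
rewrite /K sgxixi rho_cst // (Gsymx x (xi x)) => h; lra.
Qed.

Lemma QE A B z x : Q A B z x = Gx x (nabla A (sF B) x) z + Gx x (nabla A B x) (z *m F x).
Proof. by rewrite /Q /nablaF GDl GNl GFlx opprK. Qed.
Lemma QDz A B u v x : Q A B (u + v) x = Q A B u x + Q A B v x.
Proof. by rewrite /Q GDr. Qed.
Lemma QZz A B a u x : Q A B (a *: u) x = a * Q A B u x.
Proof. by rewrite /Q GZr. Qed.
Lemma QNz A B u x : Q A B (- u) x = - Q A B u x.
Proof. by rewrite /Q GNr. Qed.
Lemma KDz A u v x : K A (u + v) x = K A u x + K A v x.
Proof. by rewrite /K GDr. Qed.
Lemma KZz A a u x : K A (a *: u) x = a * K A u x.
Proof. by rewrite /K GZr. Qed.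
Lemma KNz A u x : K A (- u) x = - K A u x.
Proof. by rewrite /K GNr. Qed.


Lemma sFx B x : sF B x = B x *m F x. Proof. by []. Qed.
Lemma setax B x : seta B x = Ex x (B x). Proof. by []. Qed.
Lemma sgx A B x : sg A B x = Gx x (A x) (B x). Proof. by []. Qed.

Lemma R1 A B D x : Gam A -> Gam B -> Gam D -> Q A B (D x) x = - Q A D (B x) x.
Proof.
move=> HA' HB HD.
have m1 := metx x HA' (GamF HB) HD.
have m2 := metx x HA' HB (GamF HD).
have e : sg (sF B) D = fopp (sg B (sF D)).
  by apply: fe => y; rewrite /fopp !sgx !sFx GFlx.
rewrite e (rho_opp _ HA' (Cg HB (GamF HD))) in m1.
rewrite !sFx in m1 m2.
rewrite !QE.
have s1 := Gsymx x (B x *m F x) (nabla A D x).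
have s2 := Gsymx x (B x) (nabla A (sF D) x).
lra.
Qed.

Lemma R3' A z x : Gam A -> Q A xi z x = K A (z *m F x) x.
Proof. by move=> HA'; rewrite QE sFxi n0r // G0l add0r. Qed.

Lemma R2 A B z x : Gam A -> Gam B ->
  Q A (sF B) z x = Q A B (z *m F x) x + K A (B x) x * Ex x z + Ex x (B x) * K A z x.
Proof.
move=> HA' HB.
have e : sF (sF B) = sadd (sscale (fcst (-1)) B) (sscale (seta B) xi).
  by apply: se => y; rewrite /sadd /sscale /fcst !sFx FFx scaleN1r.
have GB1 : Gam (sscale (fcst (-1)) B) by apply: GamZ => //; exact: Ccst.
have GB2 : Gam (sscale (seta B) xi) by apply: GamZ; [exact: Ceta|exact: Gxi0].
rewrite QE e n_addr // n_leib //; last exact: Ccst.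
rewrite n_leib //; [|exact: Ceta|exact: Gxi0].
rewrite /sadd /sscale rho_cst // seta_sg metx //; last exact: Gxi0.
rewrite /fcst !GDl !GZl Gxix' (QE A B) FFx GDr GNr GZr.
rewrite /K (Gsymx x (B x) (nabla A xi x)) sgx Gxix.
lra.
Qed.


Lemma R3 A B x : Gam A -> Gam B -> Q A B (xi x) x = - K A (B x *m F x) x.
Proof. by move=> HA' HB; rewrite R1 //; [rewrite R3'|exact: Gxi0]. Qed.

Local Notation deta := (d_eta eta rho br).

Lemma rho_seta A B x : Gam A -> Gam B ->
  rho A (seta B) x = Ex x (nabla A B x) + K A (B x) x.
Proof.
move=> HA' HB; rewrite seta_sg metx //; last exact: Gxi0.
by rewrite Gxix /K Gsymx.
Qed.

Lemma deta_x A B x : Gam A -> Gam B -> deta A B x = 2^-1 * (K A (B x) x - K B (A x) x).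
Proof.
move=> HA' HB.
rewrite /d_eta !rho_seta // setax torx // ED EN.
congr (_ * _); lra.
Qed.

Lemma D2 A B D x : Gam A -> Gam B -> Gam D ->
  rho A (deta B D) x + rho B (deta D A) x + rho D (deta A B) x
  - deta (br A B) D x - deta (br B D) A x - deta (br D A) B x = 0.
Proof.
move=> HA' HB HD.
have Hr : forall U V W, Gam U -> Gam V -> Gam W -> rho U (deta V W) x =
   2^-1 * (rho U (rho V (seta W)) x - rho U (rho W (seta V)) x - rho U (seta (br V W)) x).
  move=> U V W HU HV HW.
  have e : deta V W = fmul (fcst 2^-1) (fadd (fadd (rho V (seta W)) (fopp (rho W (seta V))))
               (fopp (seta (br V W)))) by [].
  have C1 : C (rho V (seta W)) by apply: rhoC => //; exact: Ceta.
  have C2 : C (rho W (seta V)) by apply: rhoC => //; exact: Ceta.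
  have C3 : C (seta (br V W)) by apply: Ceta; exact: brG.
  rewrite e rho_scx; last by apply: CD; [apply: CD => //|]; apply: CN.
  rewrite rho_addx //; [|by apply: CD => //; apply: CN|by apply: CN].
  rewrite rho_addx ?rho_opp //; try apply: CN; try done.
  exact: HU.
rewrite !Hr //.
have Hb : forall U V W, Gam U -> Gam V -> Gam W -> deta (br U V) W x =
   2^-1 * (rho U (rho V (seta W)) x - rho V (rho U (seta W)) x
           - rho W (seta (br U V)) x - seta (br (br U V) W) x).
  move=> U V W HU HV HW.
  rewrite /d_eta /= anchor //; exact: (Ceta HW).
rewrite !Hb //.
have j := congr1 (fun t => t x) (br_jac HA' HB HD).
have j2 := congr1 (Ex x) j.
rewrite /sadd /szero !ED E0 in j2.
rewrite !setax (br_anti (brG HA' HB) HD) (br_anti (brG HB HD) HA')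
   (br_anti (brG HD HA') HB) /sopp !EN.
lra.
Qed.


Lemma nFx U V x : nabla U (sF V) x = nablaF F nabla U V x + nabla U V x *m F x.
Proof. by rewrite /nablaF subrK. Qed.

Ltac genmul := repeat match goal with |- context [?u *m ?A] =>
  let t := fresh "t" in move: (u *m A) => t end.
Ltac vec := genmul; apply/rowP => j; rewrite !mxE; ring.

Lemma NFx A B x : Gam A -> Gam B ->
  NF F br A B x = nablaF F nabla (sF A) B x - nablaF F nabla (sF B) A x
    + nablaF F nabla B A x *m F x - nablaF F nabla A B x *m F x.
Proof.
move=> HA' HB.
have HFA := GamF HA'; have HFB := GamF HB.
rewrite /NF !sFx !torx // !nFx.
rewrite !(mulmxDl, mulmxBl, mulNmx).
vec.
Qed.

Ltac gam := repeat first [assumption | apply: GamF | apply: brG | apply: nG | exact: Gxi0 | exact: Gam0].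

Lemma vtest (v w : 'rV[R]_n) x : (forall Z, Gam Z -> Gx x v (Z x) = Gx x w (Z x)) -> v = w.
Proof.
move=> h.
have [Z [HZ HZx]] := Gspan x (v - w).
have := h Z HZ; rewrite HZx => e.
have e0 : Gx x (v - w) (v - w) = 0 by rewrite GDl GNl e subrr.
apply/eqP; rewrite -subr_eq0; apply/negPn/negP => hne.
case: (hx x) => _ _ _ _ /(_ _ hne).
by rewrite -/(G (g x) (v - w) (v - w)) e0 ltxx.
Qed.

Section Dir1.
Hypothesis Hs : sasakian F xi eta g rho br Gam.

Lemma Hcf A B : Gam A -> Gam B -> deta A B = Omega F g A B.
Proof. by move=> HA' HB; case: (Hs HA' HB). Qed.
Lemma Hc A B x : Gam A -> Gam B -> deta A B x = Gx x (A x) (B x *m F x).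
Proof. by move=> HA' HB; rewrite Hcf. Qed.

Lemma R4 A B x : Gam A -> Gam B -> K A (B x) x - K B (A x) x = 2 * Gx x (A x) (B x *m F x).
Proof. move=> HA' HB; have := deta_x x HA' HB; rewrite Hc // => h; lra. Qed.

Lemma C1 A B D x : Gam A -> Gam B -> Gam D ->
  Q A B (D x) x + Q B D (A x) x + Q D A (B x) x = 0.
Proof.
move=> HA' HB HD.
have d := D2 x HA' HB HD.
rewrite (Hcf HB HD) (Hcf HD HA') (Hcf HA' HB) !Hc in d; try (gam; done).
rewrite /Omega !metx in d; try (gam; done).
rewrite !sFx !torx in d; try (gam; done).
rewrite !GDl !GNl in d.
have q1 := QE A D (B x) x; have q2 := QE B A (D x) x; have q3 := QE D B (A x) x.
have r1 := R1 x HA' HB HD; have r2 := R1 x HB HD HA'; have r3 := R1 x HD HA' HB.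
rewrite (Gsymx x (B x) (nabla A (sF D) x)) (Gsymx x (D x) (nabla B (sF A) x))
  (Gsymx x (A x) (nabla D (sF B) x)) in d.
lra.
Qed.


Lemma N1 A B z x : Gam A -> Gam B ->
  Q (sF A) B z x - Q (sF B) A z x - Q B A (z *m F x) x + Q A B (z *m F x) x
  = - 2 * Gx x (A x) (B x *m F x) * Ex x z.
Proof.
move=> HA' HB.
have h := congr1 (fun t => t x) (proj2 (Hs HA' HB)).
rewrite /= /szero NFx // Hc // in h.
rewrite /Q; move: h.
move: (nablaF F nabla (sF A) B x) (nablaF F nabla (sF B) A x) (nablaF F nabla B A x)
  (nablaF F nabla A B x) => p1 p2 p3 p4 h.
have h2 := congr1 (fun v => Gx x v z) h.
rewrite /= GDl GZl Gxix' G0l !GDl !GNl !GFlx in h2.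
lra.
Qed.

Lemma Q0l B z x : Gam B -> Q sz B z x = 0.
Proof.
move=> HB; rewrite /Q /nablaF /= sFx !n0l //; last exact: GamF.
by rewrite mul0mx subrr G0l.
Qed.

Lemma Kxi z x : K xi z x = 0.
Proof.
have [Z [HZ <-]] := Gspan x z.
have := R4 x Gxi0 HZ; rewrite Kxi0 // Gxix' EFx => h; lra.
Qed.

Lemma K2 A Z x : Gam A -> Gam Z ->
  K (sF A) (Z x *m F x) x = Gx x (A x *m F x) (Z x *m F x *m F x).
Proof.
move=> HA' HZ.
have n1 := N1 (Z x) x HA' Gxi0.
rewrite sFxi Q0l // xiFx G0r !R3' in n1; try (gam; done).
have c := C1 x Gxi0 HA' (GamF HZ).
rewrite R3 in c; try (gam; done).
rewrite R3' in c; try (gam; done).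
rewrite !sFx in c.
have r4 := R4 x (GamF HA') (GamF HZ).
rewrite !sFx in r4.
lra.
Qed.

Lemma K3a A z x : Gam A -> K (sF A) z x = Gx x (A x *m F x) (z *m F x).
Proof.
move=> HA'.
have [Z [HZ <-]] := Gspan x z.
have ez : Z x = - (Z x *m F x *m F x) + Ex x (Z x) *: xi x.
  by rewrite FFx opprD opprK subrK.
rewrite {1}ez KDz KNz KZz Kxi0; last exact: GamF.
have k := K2 x HA' (GamF HZ).
rewrite !sFx in k; rewrite k mulr0 addr0.
by rewrite (FFx x (Z x)) mulmxDl mulNmx -scalemxAl xiFx scaler0 addr0 GNr opprK.
Qed.

Lemma K3 A z x : Gam A -> K A z x = Gx x (A x) (z *m F x).
Proof.
move=> HA'.
have eA : A = sadd (sscale (fcst (-1)) (sF (sF A))) (sscale (seta A) xi).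
  by apply: se => y; rewrite /sadd /sscale /fcst !sFx FFx scaleN1r opprD opprK subrK.
have G1 : Gam (sscale (fcst (-1)) (sF (sF A))) by apply: GamZ; [exact: Ccst| gam].
have G2 : Gam (sscale (seta A) xi) by apply: GamZ; [exact: Ceta| exact: Gxi0].
rewrite /K {1}eA n_addl //; last exact: Gxi0.
rewrite !n_scl //; try (gam; done); try exact: Ccst; try exact: Ceta.
rewrite /sadd /sscale /fcst /= GDl !GZl -/(K _ z x) -/(K xi z x) Kxi K3a ?GamF //.
rewrite sFx FFx GDl GNl GZl Gxix' EFx; first lra.
gam.
Qed.


Lemma Qfin X Y Z x : Gam X -> Gam Y -> Gam Z ->
  Q X Y (Z x) x = Gx x (X x) (Y x) * Ex x (Z x) - Ex x (Y x) * Gx x (X x) (Z x).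
Proof.
move=> HX HY HZ.
have HFX := GamF HX; have HFY := GamF HY; have HFZ := GamF HZ.
have c1 := C1 x HX HY HZ.
have c2 := C1 x HX HFY HFZ.
have n1 := N1 (X x *m F x) x HY HZ.
have r2a := R2 (X x) x HFY HZ.
have r2b := R2 (X x) x HFZ HY.
have r1a := R1 x HFZ HX HFY.
have r2c := R2 (sF Z x) x HX HY.
have r1b := R1 x HZ HY HX.
rewrite !sFx in c2 r1a r2c.
rewrite (FFx x (X x)) !QDz !QNz !QZz !R3 // EFx in n1.
rewrite (FFx x (Z x)) !QDz !QNz !QZz !R3 // in r2c.
rewrite !K3 // in c1 c2 n1 r2a r2b r1a r2c r1b.
rewrite !sFx !GFFx !FFx !GDr !GNr !GZr !Gxix !EFx in n1 r2a r2b r2c.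
rewrite (Gsymx x (Z x) (Y x)) (Gsymx x (Y x) (X x)) (Gsymx x (Z x) (X x)) in n1 r2a r2b r2c *.
lra.
Qed.


Lemma dir1 s1 s2 : Gam s1 -> Gam s2 ->
  nablaF F nabla s1 s2 = (fun x => sg s1 s2 x *: xi x - seta s2 x *: s1 x).
Proof.
move=> H1 H2; apply: se => x; apply: (@vtest _ _ x) => Z HZ.
rewrite -/(Q s1 s2 (Z x) x) Qfin // GDl GNl !GZl Gxix'.
by rewrite sgx setax.
Qed.

End Dir1.

Section Dir2.
Hypothesis Hp : forall A B, Gam A -> Gam B ->
  nablaF F nabla A B = (fun x => sg A B x *: xi x - seta B x *: A x).

Lemma Hpx A B x : Gam A -> Gam B ->
  nabla A (sF B) x = nabla A B x *m F x + (Gx x (A x) (B x) *: xi x - Ex x (B x) *: A x).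
Proof. by move=> HA' HB; rewrite nFx Hp // addrC. Qed.

Lemma nxi A x : Gam A -> nabla A xi x = - (A x *m F x).
Proof.
move=> HA'.
have h := Hpx x HA' Gxi0.
rewrite sFxi n0r // Gxix Exix scale1r in h.
have h2 := congr1 (fun v => v *m F x) h.
rewrite /= mul0mx !(mulmxDl, mulmxBl, mulNmx) -scalemxAl xiFx scaler0 FFx in h2.
have k := Kxi0 x HA'; rewrite /K Gxix in k.
rewrite k scale0r in h2.
move: h2; genmul => h2.
apply/rowP => j; have hj := congr1 (fun v : 'rV[R]_n => v 0 j) h2.
rewrite /= !mxE in hj *; lra.
Qed.

Lemma deta_Om A B : Gam A -> Gam B -> deta A B = Omega F g A B.
Proof.
move=> HA' HB; apply: fe => x.
rewrite deta_x // /K !nxi // !GNl !GFlx /Omega sgx sFx.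
rewrite (Gsymx x (B x) (A x *m F x)) GFlx; lra.
Qed.

Lemma norm2 A B : Gam A -> Gam B ->
  (fun x => NF F br A B x + (2 * deta A B x) *: xi x) = sz.
Proof.
move=> HA' HB; apply: se => x.
rewrite NFx // !Hp; try (gam; done).
have -> : deta A B x = Gx x (A x) (B x *m F x) by rewrite (deta_Om HA' HB).
rewrite /szero !sgx !setax !sFx.
rewrite !(mulmxDl, mulmxBl, mulNmx) -!scalemxAl xiFx !scaler0 !GFlx.
rewrite (Gsymx x (B x) (A x *m F x)) GFlx.
genmul.
apply/rowP => j; rewrite !mxE; ring.
Qed.

Lemma dir2 : sasakian F xi eta g rho br Gam.
Proof.
move=> s1 s2 H1 H2; split; first exact: deta_Om.
exact: norm2.
Qed.

End Dir2.

End Main.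

Theorem theorem4p3 (R : realType) (M : Type) (m : nat)
    (C : fn R M -> Prop) (Gam : sec R M (2 * m + 1) -> Prop)
    (rho : sec R M (2 * m + 1) -> fn R M -> fn R M)
    (br : sec R M (2 * m + 1) -> sec R M (2 * m + 1) -> sec R M (2 * m + 1))
    (F : M -> 'M[R]_(2 * m + 1)) (xi : sec R M (2 * m + 1))
    (eta : M -> 'cV[R]_(2 * m + 1)) (g : M -> 'M[R]_(2 * m + 1))
    (nabla : sec R M (2 * m + 1) -> sec R M (2 * m + 1) -> sec R M (2 * m + 1)) :
  lie_algebroid C Gam rho br ->
  almost_contact_riemannian F xi eta g C Gam ->
  levi_civita g rho br C Gam nabla ->
  (sasakian F xi eta g rho br Gam <->
   forall s1 s2, Gam s1 -> Gam s2 ->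
     nablaF F nabla s1 s2 =
       (fun x => sg g s1 s2 x *: xi x - seta eta s2 x *: s1 x)).
Proof.
move=> HL HA HN; split.
- move=> Hs s1 s2 H1 H2; exact: (dir1 HL HA HN Hs H1 H2).
- move=> Hp; exact: (dir2 HL HA HN Hp).
Qed.
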